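(* Let $0<\alpha<n$, $0<t\le s<\infty$ and $0<q_j\le p_j<\infty$ for $j=1,2$. Suppose that $\frac1s=\frac1{p_1}+\frac1{p_2}-\frac\alpha n$ and $\frac ts>\max\left(\frac{q_1}{p_1},\frac{q_2}{p_2}\right)$. Then there exists no constant $C>0$ such that $$\|B_\alpha(f,g)\|_{\mathcal{M}^s_t}\le C\,\|f\|_{\mathcal{M}^{p_1}_{q_1}}\|g\|_{\mathcal{M}^{p_2}_{q_2}}$$ holds for all (nonnegative measurable) $f,g$ with $\|f\|_{\mathcal{M}^{p_1}_{q_1}}\|g\|_{\mathcal{M}^{p_2}_{q_2}}<\infty$.
   Context: For $0<\alpha<n$ the bilinear fractional integral operator is $B_\alpha(f,g)(x)=\int_{\mathbb{R}^n}\frac{f(x-y)g(x+y)}{|y|^{n-\alpha}}\,dy$. $\mathscr{D}$ denotes the set of dyadic cubes $2^k(m+[0,1)^n)$, $k\in\mathbb{Z}$, $m\in\mathbb{Z}^n$, and $\fint_Q h=\frac1{|Q|}\int_Q h$. For $0<q\le p<\infty$ the Morrey (quasi-)norm is $\|f\|_{\mathcal{M}^p_q}=\sup_{Q\in\mathscr{D}}|Q|^{1/p}\left(\fint_Q|f(x)|^q\,dx\right)^{1/q}$. *)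

(* Defs.v *)
From HB Require Import structures.
From mathcomp Require Import all_boot all_order all_algebra.
From mathcomp Require Import all_classical all_reals all_analysis.
Set Implicit Arguments. Unset Strict Implicit. Unset Printing Implicit Defensive.
Import Order.TTheory GRing.Theory Num.Theory.
Import numFieldNormedType.Exports.
Local Open Scope classical_set_scope.
Local Open Scope ring_scope.

(* Points of R^n are n-tuples of reals; R^n carries the product (= Borel)
   sigma-algebra of mathcomp-analysis ([measure_tuple_display]). *)

Section Defs.
Variable R : realType.

(* Lebesgue integral over R^n of a nonnegative function, written out as the
   iterated one-dimensional Lebesgue integral (Tonelli):
   int_Rn n F = \int_R ... \int_R F(x_1,...,x_n) dx_n ... dx_1. *)
Fixpoint int_Rn (n : nat) : (n.-tuple R -> \bar R) -> \bar R :=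
  match n return (n.-tuple R -> \bar R) -> \bar R with
  | 0 => fun F => F [tuple]
  | n'.+1 => fun F =>
      (\int[@lebesgue_measure R]_(x in [set: R])
          int_Rn (fun y : n'.-tuple R => F (cons_tuple x y)))%E
  end.

Definition tadd n (x y : n.-tuple R) : n.-tuple R := [tuple tnth x i + tnth y i | i < n].
Definition tsub n (x y : n.-tuple R) : n.-tuple R := [tuple tnth x i - tnth y i | i < n].

Definition enorm n (y : n.-tuple R) : R := Num.sqrt (\sum_(i < n) tnth y i ^+ 2).

Definition B_alpha n (alpha : R) (f g : n.-tuple R -> R) (x : n.-tuple R) : \bar R :=
  int_Rn (fun y => (f (tsub x y) * g (tadd x y) / powR (enorm y) (n%:R - alpha))%:E).

Definition dyadic_cube n (k : int) (m : 'I_n -> int) : set (n.-tuple R) :=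
  [set x | forall i : 'I_n,
      (2%:R ^ k * (m i)%:~R <= tnth x i) /\ (tnth x i < 2%:R ^ k * ((m i)%:~R + 1))].

Definition dyadic_vol n (k : int) : R := (2%:R ^ k) ^+ n.

Definition morrey_norm n (p q : R) (h : n.-tuple R -> \bar R) : \bar R :=
  ereal_sup [set v | exists (k : int) (m : 'I_n -> int),
    v = ((powR (dyadic_vol n k) p^-1)%:E *
          poweR ((dyadic_vol n k)^-1%:E *
                 int_Rn (fun x => ((\1_(dyadic_cube k m) x : R)%:E *
                                   poweR `|h x|%E q)%E))%E q^-1)%E ].

End Defs.

(* Main.v *)
Require Import Defs.
From HB Require Import structures.
From mathcomp Require Import all_boot all_order all_algebra.
From mathcomp Require Import all_classical all_reals all_analysis measurable_realfun.
From mathcomp Require Import lra ring.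
Import Order.TTheory GRing.Theory Num.Theory.
Local Open Scope classical_set_scope.
Local Open Scope ring_scope.



Section helpers.
Variable R : realType.
Local Open Scope ereal_scope.
Notation lam := (@lebesgue_measure R).

Lemma int_mono (f g : R -> \bar R) : (forall x, 0 <= f x) -> (forall x, f x <= g x) ->
  \int[lam]_(x in setT) f x <= \int[lam]_(x in setT) g x.
Proof.
move=> f0 fg; have g0 x : 0 <= g x by apply: le_trans (fg x).
rewrite !ge0_integralTE//; apply: ereal_sup_le => _ [h hf <-]; exists h => //= x.
exact: le_trans (hf x) (fg x).
Qed.

Lemma int_Rn_ge0 n (F : n.-tuple R -> \bar R) : (forall x, 0 <= F x) -> 0 <= int_Rn F.
Proof.
elim: n F => [|n IH] F F0 /=; first exact: F0.
apply: integral_ge0 => x _; exact: IH.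
Qed.

Lemma int_Rn_mono n (F G : n.-tuple R -> \bar R) : (forall x, 0 <= F x) ->
  (forall x, F x <= G x) -> int_Rn F <= int_Rn G.
Proof.
elim: n F G => [|n IH] F G F0 FG /=; first exact: FG.
apply: int_mono => x; first exact: int_Rn_ge0.
exact: IH.
Qed.

Lemma int_Rn_prod n (h : 'I_n -> R -> R) (a : R) : (0 <= a)%R ->
  (forall i x, (0 <= h i x)%R) -> (forall i, measurable_fun setT (h i)) ->
  (forall i, \int[lam]_(x in setT) (h i x)%:E \is a fin_num) ->
  int_Rn (fun x : n.-tuple R => (a * \prod_(i < n) h i (tnth x i))%:E) =
  (a * \prod_(i < n) fine (\int[lam]_(x in setT) (h i x)%:E))%:E.
Proof.
elim: n h a => [|n IH] h a a0 h0 mh hfin /=.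
  by rewrite !big_ord0.
set P := (\prod_(i < n) fine (\int[lam]_(x in setT) (h (lift ord0 i) x)%:E))%R.
have E x : int_Rn (fun y : n.-tuple R => (a * \prod_(i < n.+1) h i (tnth [tuple of x :: y] i))%:E)
   = ((a * P) * h ord0 x)%:E.
  rewrite (_ : (fun y => _) = fun y : n.-tuple R =>
     ((a * h ord0 x) * \prod_(i < n) h (lift ord0 i) (tnth y i))%:E); last first.
    apply: funext => y; rewrite big_ord_recl tnth0 mulrA; congr (_ * _ * _)%:E.
    by apply: eq_bigr => i _; rewrite tnthS.
  rewrite (IH (fun i => h (lift ord0 i))) //; first by rewrite /P mulrAC.
  by rewrite mulr_ge0.
under eq_integral => x _ do rewrite E EFinM.
have m0 : measurable_fun [set: R] (EFin \o h ord0).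
  by apply/measurable_EFinP; exact: mh.
have aP : (0 <= a * P)%R.
  by rewrite mulr_ge0 // /P prodr_ge0 // => i _; rewrite fine_ge0 // integral_ge0 // => x _; rewrite lee_fin.
rewrite ge0_integralZl_EFin //; last by move=> x _; rewrite lee_fin.
rewrite -[X in _ * X](fineK (hfin ord0)) -EFinM big_ord_recl /P; congr (_%:E).
by rewrite mulrA mulrAC.
Qed.
End helpers.


Section D.
Variable R : realType.

Lemma powRE' (x a : R) : 0 < x -> x `^ a = expR (a * ln x).
Proof. by move=> x0; rewrite /powR gt_eqF. Qed.

Lemma ln_powRM (x y a b : R) : 0 < x -> 0 < y ->
  ln (x `^ a * y `^ b) = a * ln x + b * ln y.
Proof.
move=> x0 y0; rewrite lnM ?ln_powR // posrE powR_gt0 //.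
Qed.

Lemma oneD (l w r M P Q : R) : 0 < l -> 0 <= w -> w <= l -> w <= M ->
  w <= M * l + 2 * r -> 0 < r -> 0 < M -> M <= 1 ->
  ln M <= (P / Q) * ln r -> 0 < P -> P <= Q ->
  l `^ P * (w / l) `^ Q <= 3 `^ Q * r `^ P.
Proof.
move=> l0 w0 wl wM wMl r0 M0 M1 lnM_ P0 PQ.
have Q0 : 0 < Q by apply: lt_le_trans PQ.
have [->|wn0] := eqVneq w 0.
  by rewrite mul0r powR0 ?gt_eqF // mulr0 mulr_ge0 // powR_ge0.
have wp : 0 < w by rewrite lt_def wn0.
have wlp : 0 < w / l by rewrite divr_gt0.
rewrite -ler_ln ?posrE ?mulr_gt0 ?powR_gt0 //.
rewrite !ln_powRM // ln_div ?posrE //.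
have ln3 : 0 <= ln (3 : R) by rewrite ln_ge0 // ler1n.
have HQP : Q * (P / Q * ln r) = P * ln r.
  by rewrite mulrA mulrCA divff ?mulr1 // gt_eqF.
have Q3 : 0 <= Q * ln 3 by rewrite mulr_ge0 // ltW.
have [lr|rl] := lerP l r.
  have h1 : ln w <= ln l by rewrite ler_ln ?posrE.
  have h2 : ln l <= ln r by rewrite ler_ln ?posrE.
  have k1 : 0 <= Q * (ln l - ln w) by rewrite mulr_ge0 ?subr_ge0 // ltW.
  have k2 : 0 <= P * (ln r - ln l) by rewrite mulr_ge0 ?subr_ge0 // ltW.
  lra.
have [Mlr|rMl] := lerP (M * l) r.
  have h1 : ln w <= ln 3 + ln r.
    by rewrite -lnM ?posrE // ler_ln ?posrE ?mulr_gt0 //; lra.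
  have h2 : ln r <= ln l by rewrite ler_ln ?posrE // ltW.
  have k1 : 0 <= Q * (ln 3 + ln r - ln w) by rewrite mulr_ge0 ?subr_ge0 // ltW.
  have k2 : 0 <= (Q - P) * (ln l - ln r) by rewrite mulr_ge0 ?subr_ge0.
  lra.
have [l1|l1] := lerP l 1.
  have h1 : ln w <= ln 3 + ln M + ln l.
    rewrite -!lnM ?posrE ?mulr_gt0 // ler_ln ?posrE ?mulr_gt0 //; nra.
  have h2 : ln l <= 0 by rewrite ln_le0.
  have k1 : 0 <= Q * (ln 3 + ln M + ln l - ln w) by rewrite mulr_ge0 ?subr_ge0 // ltW.
  have k2 : 0 <= P * (- ln l) by rewrite mulr_ge0 ?oppr_ge0 // ltW.
  have k3 : 0 <= Q * (P / Q * ln r - ln M) by rewrite mulr_ge0 ?subr_ge0 // ltW.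
  lra.
have h1 : ln w <= ln M by rewrite ler_ln ?posrE.
have h2 : 0 <= ln l by rewrite ln_ge0 // ltW.
have k1 : 0 <= Q * (ln M - ln w) by rewrite mulr_ge0 ?subr_ge0 // ltW.
have k2 : 0 <= (Q - P) * ln l by rewrite mulr_ge0 ?subr_ge0.
have k3 : 0 <= Q * (P / Q * ln r - ln M) by rewrite mulr_ge0 ?subr_ge0 // ltW.
lra.
Qed.
End D.


Definition ind {R : realType} (a b : R) : R -> R := \1_(`[a, b[%classic).
Definition comb {R : realType} (N : nat) (c d : R) (x : R) : R :=
  \sum_(j < N) ind (j%:R / N%:R + c) (j%:R / N%:R + d) x.

Section B.
Variable R : realType.
Notation lam := (@lebesgue_measure R).

Lemma indE (a b x : R) : ind a b x = ((a <= x) && (x < b))%:R.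
Proof. by rewrite /ind indicE mem_setE in_itv. Qed.

Lemma ind_ge0 (a b x : R) : 0 <= ind a b x.
Proof. by rewrite indE ler0n. Qed.

Lemma ind_le1 (a b x : R) : ind a b x <= 1.
Proof. by rewrite indE lern1 leq_b1. Qed.

Lemma ind_meas (a b : R) : measurable_fun setT (ind a b).
Proof. by apply/measurable_indicP; exact: measurable_itv. Qed.

Lemma ind_int (a b : R) : a <= b ->
  (\int[lam]_(x in setT) (ind a b x)%:E = (b - a)%:E)%E.
Proof.
move=> ab; have mI : measurable (`[a, b[%classic : set R) by exact: measurable_itv.
rewrite /ind integral_indic //.
rewrite setIT; have := @lebesgue_measure_itv R `[a, b[; rewrite /= lte_fin => ->.
have [ab'|ba] := ltP a b; first by [].
have -> : b = a by apply/eqP; rewrite eq_le ab ba.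
by rewrite subrr.
Qed.

Lemma comb_ge0 N (c d x : R) : 0 <= comb N c d x.
Proof. by apply: sumr_ge0 => j _; exact: ind_ge0. Qed.

Lemma comb_meas N (c d : R) : measurable_fun setT (comb N c d).
Proof. by apply: measurable_sum => j; exact: ind_meas. Qed.

Lemma ind01 (a b x : R) : ind a b x != 0 -> ind a b x = 1.
Proof. by rewrite indE; case: ((a <= x) && (x < b)); rewrite ?eqxx. Qed.

Lemma two_in N (c d x : R) (i j : 'I_N) : d - c <= N%:R^-1 ->
  ind (i%:R / N%:R + c) (i%:R / N%:R + d) x != 0 ->
  ind (j%:R / N%:R + c) (j%:R / N%:R + d) x != 0 -> (j <= i)%N.
Proof.
move=> dc; rewrite !indE !pnatr_eq0 !eqb0 !negbK => /andP[h1 h2] /andP[h3 h4].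
have N0 : (0 < N)%N := leq_ltn_trans (leq0n _) (ltn_ord i).
have Np : (0 : R) < N%:R by rewrite ltr0n.
have : j%:R / N%:R < (i%:R + 1) / N%:R :> R.
  rewrite mulrDl mul1r; lra.
by rewrite ltr_pM2r ?invr_gt0 // natr1 ltr_nat ltnS.
Qed.
Arguments two_in {N c d x i j}.

Lemma comb01 N (c d x : R) : d - c <= N%:R^-1 ->
  comb N c d x = 0 \/ comb N c d x = 1.
Proof.
move=> dc; case: (pselect (exists j : 'I_N, ind (j%:R / N%:R + c) (j%:R / N%:R + d) x != 0)).
  move=> [j hj]; right; rewrite /comb (bigD1 j) //= big1 ?addr0; first exact: ind01.
  move=> i ij; apply/eqP; apply: contraT => hi.
  have e1 := two_in dc hi hj; have e2 := two_in dc hj hi.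
  by move: ij; rewrite -val_eqE /= eqn_leq e1 e2.
move=> H; left; rewrite /comb big1 // => i _; apply/eqP; apply: contraT => hi.
by exfalso; apply: H; exists i.
Qed.
Arguments comb01 {N c d} x.

Lemma comb_le1 N (c d x : R) : d - c <= N%:R^-1 -> comb N c d x <= 1.
Proof. by move=> dc; case: (comb01 x dc) => ->. Qed.

Lemma comb_ge_ind N (c d x : R) (j : 'I_N) :
  ind (j%:R / N%:R + c) (j%:R / N%:R + d) x <= comb N c d x.
Proof.
rewrite /comb (bigD1 j) //= lerDl; apply: sumr_ge0 => i _; exact: ind_ge0.
Qed.

Lemma comb_neq0 N (c d x : R) : comb N c d x != 0 ->
  exists j : 'I_N, ind (j%:R / N%:R + c) (j%:R / N%:R + d) x != 0.
Proof.
move=> H; apply: contra_notP (negP H) => nex; apply/eqP.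
rewrite /comb big1 // => i _; apply/eqP; apply: contraT => hi.
by exfalso; apply: nex; exists i.
Qed.

Lemma count_bound (u v : R) N : u <= v ->
  \sum_(j < N) ((u < j%:R) && (j%:R < v))%:R <= v - u + 1 /\
  (\sum_(j < N) ((u < j%:R) && (j%:R < v))%:R <= N%:R - u \/
   \sum_(j < N) ((u < j%:R) && (j%:R < v))%:R = 0 :> R).
Proof.
move=> uv; elim: N => [|N [IH1 IH2]].
  by rewrite big_ord0; split; [lra|right].
move: IH1 IH2; set S := \sum_(j < N) _ => IH1 IH2.
rewrite big_ord_recr /= -/S.
have S0 : 0 <= S by apply: sumr_ge0 => i _; rewrite ler0n.
case: (boolP ((u < N%:R) && (N%:R < v))) => [/andP[h1 h2]|h].
  have hS : S <= N%:R - u.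
    by case: IH2 => [//|e]; rewrite e subr_ge0 ltW.
  rewrite -natr1 /= (_ : 1%:R = 1) //; split; [lra|left; lra].
rewrite /= addr0 -natr1; split => //.
by case: IH2 => [?|->]; [left; lra|right].
Qed.

Lemma cnt_le_N (u v : R) N :
  \sum_(j < N) ((u < j%:R) && (j%:R < v))%:R <= N%:R :> R.
Proof.
apply: (@le_trans _ _ (\sum_(j < N) (1 : R))).
  by apply: ler_sum => j _; rewrite lern1 leq_b1.
by rewrite sumr_const card_ord.
Qed.

Local Open Scope ereal_scope.
Lemma int_bound N (r a b : R) : (0 < N)%N -> (0 < r)%R -> (r * N%:R <= 1)%R -> (a <= b)%R ->
  let w := \int[lam]_(x in setT) (ind a b x * comb N 0 r x)%:E in
  w \is a fin_num /\ (fine w <= b - a)%R /\ (fine w <= r * N%:R)%R /\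
  (fine w <= r * N%:R * (b - a) + 2 * r)%R.
Proof.
move=> N0 r0 rN ab w.
have Np : (0 < N%:R :> R)%R by rewrite ltr0n.
have dc : (r - 0 <= N%:R^-1)%R by rewrite subr0 -(ler_pM2r Np) mulVf ?gt_eqF.
have mf : measurable_fun setT (fun x => (ind a b x * comb N 0 r x)%:E).
  by apply/measurable_EFinP; apply: measurable_funM; [exact: ind_meas|exact: comb_meas].
have w0 : 0 <= w by apply: integral_ge0 => x _; rewrite lee_fin mulr_ge0 ?ind_ge0 ?comb_ge0.
have w1 : w <= (b - a)%:E.
  rewrite -ind_int //; apply: int_mono => x; first by rewrite lee_fin mulr_ge0 ?ind_ge0 ?comb_ge0.
  by rewrite lee_fin ler_piMr ?ind_ge0 ?comb_le1.
have wfin : w \is a fin_num by rewrite ge0_fin_numE // (le_lt_trans w1) ?ltry.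
pose cond (j : 'I_N) := ((N%:R * (a - r) < j%:R) && (j%:R < N%:R * b))%R.
pose cnt : R := (\sum_(j < N) (cond j)%:R)%R.
have w2 : w <= (r * cnt)%:E.
  apply: (@le_trans _ _ (\int[lam]_(x in setT) (\sum_(j < N) (cond j)%:R * ind (j%:R / N%:R + 0) (j%:R / N%:R + r) x)%:E)).
    apply: int_mono => x; first by rewrite lee_fin mulr_ge0 ?ind_ge0 ?comb_ge0.
    rewrite lee_fin /comb mulr_sumr; apply: ler_sum => j _.
    case: (boolP (cond j)) => cj; first by rewrite mul1r ler_piMl ?ind_ge0 ?ind_le1.
    rewrite mul0r; have [->|ha] := eqVneq (ind a b x) 0%R; first by rewrite mul0r.
    have [->|hj] := eqVneq (ind (j%:R / N%:R + 0) (j%:R / N%:R + r) x) 0%R; first by rewrite mulr0.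
    exfalso; move: cj ha hj; rewrite /cond !indE !pnatr_eq0 !eqb0 !negbK addr0.
    move=> /negP cj /andP[h1 h2] /andP[h3 h4]; apply: cj; apply/andP; split.
      by rewrite mulrC -ltr_pdivlMr //; lra.
    by rewrite mulrC -ltr_pdivrMr //; lra.
  under eq_integral => x _ do rewrite -sumEFin.
  rewrite ge0_integral_sum //; last 2 first.
    - move=> j; apply/measurable_EFinP; apply: measurable_funM; first exact: measurable_cst.
      exact: ind_meas.
    - by move=> j x _; rewrite lee_fin mulr_ge0 ?ind_ge0.
  have E (k : 'I_N) : \int[lam]_(x in setT) ((cond k)%:R * ind (k%:R / N%:R + 0) (k%:R / N%:R + r) x)%:E
      = ((cond k)%:R * r)%:E.
    under eq_integral => x _ do rewrite EFinM.
    have nn : forall x, setT x -> 0 <= (ind (k%:R / N%:R + 0) (k%:R / N%:R + r) x)%:E.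
      by move=> x _; rewrite lee_fin ind_ge0.
    have mm : measurable_fun setT (EFin \o ind (k%:R / N%:R + 0) (k%:R / N%:R + r)).
      by apply/measurable_EFinP; exact: ind_meas.
    rewrite ge0_integralZl_EFin ?ler0n //.
    rewrite ind_int; last by rewrite lerD2l ltW.
    by rewrite -EFinM; congr (_ * _)%:E; lra.
  under eq_bigr => k _ do rewrite E.
  rewrite sumEFin lee_fin /cnt mulr_sumr; apply: ler_sum => k _; rewrite mulrC.
  done.
have hle : (N%:R * (a - r) <= N%:R * b)%R.
  by rewrite ler_pM2l //; lra.
have [c1 _] := count_bound _ _ N hle.
have c3 : (cnt <= N%:R)%R by exact: cnt_le_N.
have c1' : (cnt <= N%:R * b - N%:R * (a - r) + 1)%R by exact: c1.
have w2' : (fine w <= r * cnt)%R by rewrite -lee_fin (fineK wfin).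
have w1' : (fine w <= b - a)%R by rewrite -lee_fin (fineK wfin).
have k1 : (r * cnt <= r * N%:R)%R by rewrite ler_pM2l.
have k2 : (r * cnt <= r * (N%:R * b - N%:R * (a - r) + 1))%R by rewrite ler_pM2l.
have k3 : (r * (r * N%:R) <= r * 1)%R by rewrite ler_pM2l.
split => //; split => //; split; first exact: le_trans k1.
lra.
Qed.
End B.


Definition fE {R : realType} n N (r : R) (x : n.-tuple R) : R :=
  \prod_(i < n) comb N 0 r (tnth x i).

Section E.
Variable R : realType.
Notation lam := (@lebesgue_measure R).

Lemma fE_meas n N (r : R) : measurable_fun setT (@fE R n N r).
Proof.
apply: measurable_prod => i _.
apply: measurableT_comp; [exact: comb_meas|exact: measurable_tnth].
Qed.

Lemma fE_ge0 n N (r : R) x : 0 <= @fE R n N r x.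
Proof. by apply: prodr_ge0 => i _; exact: comb_ge0. Qed.

Lemma fE01 n N (r : R) x : r - 0 <= N%:R^-1 -> @fE R n N r x = 0 \/ @fE R n N r x = 1.
Proof.
move=> dc; rewrite /fE; apply: (big_ind (fun y => y = 0 \/ y = 1)); first by right.
  by move=> u v [->|->] [->|->]; rewrite ?mul0r ?mulr0 ?mulr1; [left|left|left|right].
move=> i _; exact: comb01.
Qed.

Lemma powRXn (x a : R) n : 0 <= x -> (x ^+ n) `^ a = (x `^ a) ^+ n.
Proof.
move=> x0; elim: n => [|n IH]; first by rewrite !expr0 powR1.
by rewrite !exprS powRM ?exprn_ge0 // IH.
Qed.

Lemma powR_prod n (F : 'I_n -> R) a : (forall i, 0 <= F i) ->
  (\prod_(i < n) F i) `^ a = \prod_(i < n) (F i `^ a).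
Proof.
elim: n F => [|n IH] F F0; first by rewrite !big_ord0 powR1.
rewrite !big_ord_recl powRM ?IH // prodr_ge0 //.
Qed.

Lemma morrey_ge0 n (p q : R) (h : n.-tuple R -> \bar R) : (0 <= morrey_norm p q h)%E.
Proof.
apply: le_ereal_sup_tmp; eexists; first by exists 0, (fun=> 0).
by rewrite mule_ge0 // ?lee_fin ?powR_ge0 // poweR_ge0.
Qed.

Lemma prod_cst n (c : R) : \prod_(i < n) c = c ^+ n.
Proof. by rewrite prodr_const card_ord. Qed.

Lemma morrey_fE n N (r p q : R) : (0 < N)%N -> 0 < r -> r * N%:R <= 1 -> 0 < q -> q <= p ->
  ln (r * N%:R) <= (p^-1 / q^-1) * ln r ->
  (morrey_norm p q (fun x => (@fE R n N r x)%:E) <= ((3 `^ q^-1 * r `^ p^-1) ^+ n)%:E)%E.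
Proof.
move=> N0 r0 rN q0 qp lnrN.
have Np : (0 < N%:R :> R)%R by rewrite ltr0n.
have dc : (r - 0 <= N%:R^-1)%R by rewrite subr0 -(ler_pM2r Np) mulVf ?gt_eqF.
apply: ge_ereal_sup => _ [k [m ->]].
set l : R := 2%:R ^ k.
have l0 : 0 < l by exact: exprz_gt0.
pose a := fun i : 'I_n => l * (m i)%:~R.
pose b := fun i : 'I_n => l * ((m i)%:~R + 1).
have E1 : (fun x : n.-tuple R => ((\1_(dyadic_cube k m) x : R)%:E * poweR `|(fE n N r x)%:E| q)%E)
   = fun x => (1 * \prod_(i < n) (ind (a i) (b i) (tnth x i) * comb N 0 r (tnth x i)))%:E.
  apply: funext => x.
  rewrite abse_EFin ger0_norm ?fE_ge0 // poweR_EFin.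
  have -> : fE n N r x `^ q = fE n N r x.
    by case: (fE01 n N r x dc) => ->; [rewrite powR0 ?gt_eqF | rewrite powR1].
  rewrite -EFinM mul1r big_split /=; congr (_ * _)%:E.
  rewrite indicE; case: (pselect (dyadic_cube k m x)) => H.
    rewrite mem_set // big1 // => i _; rewrite indE; have [h1 h2] := H i.
    by rewrite /a /b h1 h2.
  rewrite memNset //.
  case: (pselect (exists i, ~ ((a i <= tnth x i) /\ (tnth x i < b i)))) => [[i Hi]|nex]; last first.
    exfalso; apply: H => i; apply: (contra_notP _ nex) => nCi; exists i; exact: nCi.
  rewrite (bigD1 i) //= indE (_ : (_ && _) = false) ?mul0r //.
  by apply/negbTE/negP => /andP[h1 h2]; apply: Hi.
rewrite E1.
have abl i : b i - a i = l by rewrite /a /b; ring.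
have ab i : a i <= b i by rewrite -subr_ge0 abl ltW.
pose h := fun (i : 'I_n) (y : R) => ind (a i) (b i) y * comb N 0 r y.
have IB i := @int_bound R N r (a i) (b i) N0 r0 rN (ab i).
rewrite (@int_Rn_prod R n h 1) //; last 3 first.
- by move=> i y; rewrite /h mulr_ge0 ?ind_ge0 ?comb_ge0.
- by move=> i; apply: measurable_funM; [exact: ind_meas|exact: comb_meas].
- by move=> i; have [] := IB i.

rewrite /dyadic_vol -/l -[((_ ^- n)%:E * _)%E]EFinM poweR_EFin -EFinM lee_fin.
pose w := fun i => fine (\int[lam]_(x in setT) (h i x)%:E).
under eq_bigr => i _ do rewrite -[fine _]/(w i).
have w0 i : 0 <= w i.
  by rewrite /w fine_ge0 // integral_ge0 // => y _; rewrite lee_fin /h mulr_ge0 ?ind_ge0 ?comb_ge0.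
have Ew : (l ^+ n)^-1 * (1 * \prod_(i < n) w i) = \prod_(i < n) (w i / l).
  by rewrite mul1r big_split /= prod_cst exprVn mulrC.
rewrite Ew powRXn; last exact: ltW.
rewrite powR_prod; last by move=> i; rewrite divr_ge0 // ltW.
rewrite -prod_cst -big_split -prod_cst /=; apply: ler_prod => i _; apply/andP; split.
  by rewrite mulr_ge0 // powR_ge0.
have [_ [h1 [h2 h3]]] := IB i.
rewrite abl in h1 h3.
have P0 : 0 < p^-1 by rewrite invr_gt0 (lt_le_trans q0).
have PQ : p^-1 <= q^-1 by rewrite lef_pV2 ?posrE // (lt_le_trans q0).
apply: (@oneD R l (w i) r (r * N%:R) p^-1 q^-1 l0 (w0 i) h1 h2 h3 r0 _ rN lnrN P0 PQ).
by rewrite mulr_gt0.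
Qed.

End E.


Section F.
Variable R : realType.
Notation lam := (@lebesgue_measure R).

Definition c0 n (alpha r : R) := (powR (Num.sqrt (n%:R * (r / 4) ^+ 2)) (n%:R - alpha))^-1.
Definition beta n (alpha r : R) := c0 n alpha r * (r / 8) ^+ n.

Lemma c0_gt0 n (alpha r : R) : 0 < r -> (0 < n)%N -> 0 < c0 n alpha r.
Proof.
move=> r0 n0; rewrite /c0 invr_gt0 powR_gt0 // sqrtr_gt0 mulr_gt0 ?ltr0n //.
by rewrite exprn_gt0 // divr_gt0.
Qed.

Lemma beta_gt0 n (alpha r : R) : 0 < r -> (0 < n)%N -> 0 < beta n alpha r.
Proof. by move=> r0 n0; rewrite /beta mulr_gt0 ?c0_gt0 // exprn_gt0 // divr_gt0. Qed.

Lemma prod_ge1 n (F : 'I_n -> R) : (forall i, 1 <= F i) -> 1 <= \prod_(i < n) F i.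
Proof.
move=> F1; apply: (big_ind (fun y => 1 <= y)); [done| |by move=> i _; exact: F1].
by move=> u v; exact: mulr_ege1.
Qed.

Lemma arith_sub (u xi yi r : R) : u + r / 4 <= xi -> xi < u + 3 * r / 4 ->
  r / 8 <= yi -> yi < r / 4 -> 0 < r -> (u + 0 <= xi - yi) && (xi - yi < u + r).
Proof. by move=> *; apply/andP; split; lra. Qed.

Lemma arith_add (u xi yi r : R) : u + r / 4 <= xi -> xi < u + 3 * r / 4 ->
  r / 8 <= yi -> yi < r / 4 -> 0 < r -> (u + 0 <= xi + yi) && (xi + yi < u + r).
Proof. by move=> *; apply/andP; split; lra. Qed.

Lemma B_lower n N (r alpha : R) (x : n.-tuple R) : (0 < N)%N -> 0 < r -> r * N%:R <= 1 ->
  (0 < n)%N -> alpha < n%:R ->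
  (forall i, exists j : 'I_N, ind (j%:R / N%:R + r / 4) (j%:R / N%:R + 3 * r / 4) (tnth x i) != 0) ->
  ((beta n alpha r)%:E <= B_alpha alpha (fE n N r) (fE n N r) x)%E.
Proof.
move=> N0 r0 rN n0 an Hx.
have Np : (0 < N%:R :> R)%R by rewrite ltr0n.
have c00 := @c0_gt0 n alpha r r0 n0.
have Eb : (beta n alpha r)%:E = int_Rn (fun y : n.-tuple R =>
      (c0 n alpha r * \prod_(i < n) ind (r / 8) (r / 4) (tnth y i))%:E).
  have e8 : r / 8 <= r / 4 by lra.
  have e88 : r / 4 - r / 8 = r / 8 by lra.
  have H1 : forall (i : 'I_n) y, 0 <= ind (r / 8) (r / 4) y by move=> i y; exact: ind_ge0.
  have H2 : forall (i : 'I_n), measurable_fun setT (ind (r / 8) (r / 4)) by move=> i; exact: ind_meas.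
  have H3 : forall (i : 'I_n), (\int[lam]_(x in setT) (ind (r / 8) (r / 4) x)%:E)%E \is a fin_num.
    by move=> i; rewrite ind_int.
  rewrite (@int_Rn_prod R n (fun=> ind (r / 8) (r / 4)) (c0 n alpha r) (ltW c00) H1 H2 H3).
  by rewrite ind_int //= prod_cst /beta e88.
rewrite Eb /B_alpha; apply: int_Rn_mono => y.
  by rewrite lee_fin mulr_ge0 ?prodr_ge0 // ?ltW // => i _; exact: ind_ge0.
rewrite lee_fin.
have [P0|Pn0] := eqVneq (\prod_(i < n) ind (r / 8) (r / 4) (tnth y i)) 0.
  by rewrite P0 mulr0 divr_ge0 ?powR_ge0 // mulr_ge0 // fE_ge0.
have Hy i : r / 8 <= tnth y i < r / 4.
  apply: contraNT Pn0 => H; rewrite (bigD1 i) //= indE (negbTE H) mul0r //.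
have P1 : \prod_(i < n) ind (r / 8) (r / 4) (tnth y i) = 1.
  by apply: big1 => i _; rewrite indE Hy.
rewrite P1 mulr1.
have fs : 1 <= fE n N r (tsub x y).
  rewrite /fE; apply: prod_ge1 => i; have [j hj] := Hx i.
  move: hj; rewrite indE pnatr_eq0 eqb0 negbK => /andP[h1 h2].
  have /andP[h3 h4] := Hy i.
  apply: le_trans (@comb_ge_ind R N 0 r _ j); rewrite indE /tsub tnth_mktuple.
  by rewrite arith_sub.
have fa : 1 <= fE n N r (tadd x y).
  rewrite /fE; apply: prod_ge1 => i; have [j hj] := Hx i.
  move: hj; rewrite indE pnatr_eq0 eqb0 negbK => /andP[h1 h2].
  have /andP[h3 h4] := Hy i.
  apply: le_trans (@comb_ge_ind R N 0 r _ j); rewrite indE /tadd tnth_mktuple.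
  by rewrite arith_add.
have ny : enorm y <= Num.sqrt (n%:R * (r / 4) ^+ 2).
  rewrite /enorm ler_sqrt; last by rewrite mulr_ge0 ?ler0n ?sqr_ge0.
  have -> : n%:R * (r / 4) ^+ 2 = \sum_(i < n) (r / 4) ^+ 2 by rewrite sumr_const card_ord mulr_natl.
  apply: ler_sum => i _; have /andP[h3 h4] := Hy i.
  have y0 : 0 <= tnth y i by apply: le_trans h3; rewrite divr_ge0 // ltW.
  by rewrite !expr2 ler_pM // ltW.
have eny : 0 < enorm y.
  rewrite /enorm sqrtr_gt0; pose i0 : 'I_n := Ordinal n0.
  rewrite (bigD1 i0) //=; apply: (@lt_le_trans _ _ (tnth y i0 ^+ 2)); last first.
    by rewrite lerDl sumr_ge0 // => i _; rewrite sqr_ge0.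
  have /andP[h3 h4] := Hy i0.
  by rewrite exprn_gt0 // (lt_le_trans _ h3) // divr_gt0.
have Dp : 0 < powR (enorm y) (n%:R - alpha) by rewrite powR_gt0.
have DD0 : powR (enorm y) (n%:R - alpha) <= powR (Num.sqrt (n%:R * (r / 4) ^+ 2)) (n%:R - alpha).
  by apply: ge0_ler_powR; [rewrite subr_ge0 ltW | rewrite nnegrE ltW | rewrite nnegrE sqrtr_ge0 | exact: ny].
rewrite /c0; apply: (@le_trans _ _ (powR (enorm y) (n%:R - alpha))^-1).
  by rewrite lef_pV2 ?posrE // (lt_le_trans Dp).
by apply: ler_peMl; [rewrite invr_ge0 ltW | exact: mulr_ege1].
Qed.

Lemma ind_int2 (u r : R) : 0 < r ->
  (\int[lam]_(x in setT) (ind (u + r / 4) (u + 3 * r / 4) x)%:E = (r / 2)%:E)%E.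
Proof.
move=> r0; have h1 : u + r / 4 <= u + 3 * r / 4 by lra.
have h2 : u + 3 * r / 4 - (u + r / 4) = r / 2 by lra.
by rewrite ind_int // h2.
Qed.

Lemma phi_int N (r : R) : 0 < r ->
  (\int[lam]_(x in setT) (comb N (r / 4) (3 * r / 4) x)%:E = (N%:R * (r / 2))%:E)%E.
Proof.
move=> r0; rewrite /comb; under eq_integral => x _ do rewrite -sumEFin.
rewrite ge0_integral_sum //; last 2 first.
- by move=> j; apply/measurable_EFinP; exact: ind_meas.
- by move=> j x _; rewrite lee_fin ind_ge0.
under eq_bigr => j _ do rewrite ind_int2 //.
by rewrite sumEFin sumr_const card_ord mulr_natl.
Qed.

Lemma arith_cube (j N : nat) (x r : R) : (j < N)%N -> 0 < r -> r * N%:R <= 1 ->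
  j%:R / N%:R + r / 4 <= x -> x < j%:R / N%:R + 3 * r / 4 -> 0 <= x /\ x < 1.
Proof.
move=> jN r0 rN h1 h2.
have N0 : (0 < N)%N by apply: leq_ltn_trans jN.
have Np : (0 < N%:R :> R)%R by rewrite ltr0n.
have J0 : 0 <= j%:R / N%:R :> R by rewrite divr_ge0.
have JN : j%:R / N%:R * N%:R = j%:R :> R by rewrite divfK // gt_eqF.
have j1 : j%:R + 1 <= N%:R :> R by rewrite natr1 ler_nat.
split; first lra.
have h3 : x * N%:R < (j%:R / N%:R + 3 * r / 4) * N%:R by rewrite ltr_pM2r.
rewrite -(ltr_pM2r Np) mul1r; move: h3; rewrite mulrDl JN; lra.
Qed.

Lemma morrey_B_lower n N (r alpha s t : R) : (0 < N)%N -> 0 < r -> r * N%:R <= 1 ->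
  (0 < n)%N -> alpha < n%:R -> 0 < t ->
  ((((beta n alpha r) `^ t * (N%:R * (r / 2)) ^+ n) `^ t^-1)%:E <=
     morrey_norm s t (B_alpha alpha (fE n N r) (fE n N r)))%E.
Proof.
move=> N0 r0 rN n0 an t0.
have Np : (0 < N%:R :> R)%R by rewrite ltr0n.
have b0 := @beta_gt0 n alpha r r0 n0.
apply: le_ereal_sup_tmp; eexists; first by exists 0, (fun=> 0).
rewrite /dyadic_vol expr0z expr1n powR1 invr1 !mul1e -poweR_EFin.
apply: gt0_ler_poweR; first by rewrite invr_ge0 ltW.
- by rewrite in_itv /= leey andbT lee_fin mulr_ge0 ?powR_ge0 // exprn_ge0 // mulr_ge0 ?ler0n // divr_ge0 // ltW.
- rewrite in_itv /= leey andbT; apply: int_Rn_ge0 => x.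
  by rewrite mule_ge0 // ?lee_fin ?indic_ge0 // poweR_ge0.
have dc : 3 * r / 4 - r / 4 <= N%:R^-1.
  rewrite -(ler_pM2r Np) mulVf ?gt_eqF //; lra.
have H1 : forall (i : 'I_n) y, 0 <= comb N (r / 4) (3 * r / 4) y by move=> i y; exact: comb_ge0.
have H2 : forall (i : 'I_n), measurable_fun setT (comb N (r / 4) (3 * r / 4)) by move=> i; exact: comb_meas.
have H3 : forall (i : 'I_n), (\int[lam]_(x in setT) (comb N (r / 4) (3 * r / 4) x)%:E)%E \is a fin_num.
  by move=> i; rewrite phi_int.
have := @int_Rn_prod R n (fun=> comb N (r / 4) (3 * r / 4)) ((beta n alpha r) `^ t) (powR_ge0 _ _) H1 H2 H3.
rewrite phi_int //= prod_cst => <-.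
apply: int_Rn_mono => x.
  by rewrite lee_fin mulr_ge0 ?powR_ge0 // prodr_ge0 // => i _; exact: comb_ge0.
have [P0|Pn0] := eqVneq (\prod_(i < n) comb N (r / 4) (3 * r / 4) (tnth x i)) 0.
  by rewrite P0 mulr0 mule_ge0 // ?lee_fin ?indic_ge0 // poweR_ge0.
have Hx i : exists j : 'I_N, ind (j%:R / N%:R + r / 4) (j%:R / N%:R + 3 * r / 4) (tnth x i) != 0.
  apply: comb_neq0; apply: contraNneq Pn0 => H.
  by rewrite (bigD1 i) //= H mul0r.
have HB := @B_lower n N r alpha x N0 r0 rN n0 an Hx.
have Q0 : dyadic_cube 0 (fun=> 0) x.
  move=> i; have [j hj] := Hx i; move: hj; rewrite indE pnatr_eq0 eqb0 negbK => /andP[h1 h2].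
  have [h3 h4] := @arith_cube j N (tnth x i) r (ltn_ord j) r0 rN h1 h2.
  by rewrite expr0z !mul1r add0r; split.
rewrite indicE mem_set // mul1e gee0_abs; last by apply: le_trans HB; rewrite lee_fin ltW.
apply: (@le_trans _ _ (((beta n alpha r) `^ t)%:E)).
  rewrite lee_fin ler_piMr ?powR_ge0 //; apply: prodr_ile1 => i _.
  by rewrite comb_ge0 comb_le1.
rewrite -poweR_EFin; apply: gt0_ler_poweR => //; first exact: ltW.
- by rewrite in_itv /= leey andbT lee_fin ltW.
- by rewrite in_itv /= leey andbT; apply: le_trans HB; rewrite lee_fin ltW.
Qed.
End F.


Section G.
Variable R : realType.

Lemma lnU_eq n (Q P r : R) : 0 < r ->
  ln ((3 `^ Q * r `^ P) ^+ n) = n%:R * (Q * ln 3 + P * ln r).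
Proof.
move=> r0; rewrite lnXn ?mulr_gt0 ?powR_gt0 // -[_ *+ n]mulr_natl lnM ?posrE ?powR_gt0 //.
by rewrite !ln_powR.
Qed.

Lemma lnL_eq n N (r alpha t : R) : (0 < N)%N -> 0 < r -> (0 < n)%N ->
  ln (((@beta R n alpha r) `^ t * (N%:R * (r / 2)) ^+ n) `^ t^-1) =
  t^-1 * (t * (- ((n%:R - alpha) * (ln (Num.sqrt n%:R) + (ln r - ln 4))) + n%:R * (ln r - ln 8))
           + n%:R * (ln N%:R + (ln r - ln 2))).
Proof.
move=> N0 r0 n0.
have Np : (0 < N%:R :> R)%R by rewrite ltr0n.
have np : (0 < n%:R :> R)%R by rewrite ltr0n.
have b0 := @beta_gt0 R n alpha r r0 n0.
have p1 : 0 < (@beta R n alpha r) `^ t by rewrite powR_gt0.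
have p2 : 0 < N%:R * (r / 2) by rewrite mulr_gt0 ?divr_gt0.
rewrite ln_powR lnM ?posrE ?exprn_gt0 // ln_powR.
rewrite lnXn // -[_ *+ n]mulr_natl lnM ?posrE ?divr_gt0 // ln_div ?posrE //.
congr (_ * (_ * _ + _)).
have p3 := @c0_gt0 R n alpha r r0 n0.
have p4 : 0 < (r / 8) ^+ n by rewrite exprn_gt0 ?divr_gt0.
rewrite /beta lnM ?posrE //.
rewrite lnXn ?divr_gt0 // -[_ *+ n]mulr_natl ln_div ?posrE //; congr (_ + _).
have p5 : 0 < n%:R * (r / 4) ^+ 2 by rewrite mulr_gt0 ?exprn_gt0 ?divr_gt0.
rewrite /c0 lnV ?posrE ?powR_gt0 ?sqrtr_gt0 // ln_powR.
rewrite sqrtrM ?ler0n // sqrtr_sqr ger0_norm ?divr_ge0 ?ltW //.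
by rewrite lnM ?posrE ?sqrtr_gt0 ?divr_gt0 // ln_div ?posrE.
Qed.
Lemma alg_id (n al t th la P1 P2 Q1 Q2 lC l3 a l4 l8 l2 : R) :
  n != 0 -> t != 0 -> 1 - th != 0 ->
  t^-1 * (t * (- ((n - al) * (a + (- ((1 - th)^-1 * la) - l4))) + n * (- ((1 - th)^-1 * la) - l8))
           + n * (la + (- ((1 - th)^-1 * la) - l2)))
  - (lC + n * (Q1 * l3 + P1 * - ((1 - th)^-1 * la)) + n * (Q2 * l3 + P2 * - ((1 - th)^-1 * la)))
  = n * (1 - th)^-1 * ((P1 + P2 - al / n) - th / t) * la +
    (- (n - al) * (a - l4) - n * l8 - n * l2 / t - lC - n * (Q1 + Q2) * l3).
Proof. by move=> n0 t0 th0; field; rewrite t0 n0 th0. Qed.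

Lemma final_ineq n N (alpha t C th p1 p2 q1 q2 : R) : (0 < N)%N -> (0 < n)%N -> 0 < C -> 0 < t ->
  1 - th != 0 ->
  let la := ln (N%:R : R) in
  let r := expR (- ((1 - th)^-1 * la)) in
  0 < n%:R * (1 - th)^-1 * ((p1^-1 + p2^-1 - alpha / n%:R) - th / t) * la +
    (- (n%:R - alpha) * (ln (Num.sqrt n%:R) - ln 4) - n%:R * ln 8 - n%:R * ln 2 / t - ln C
     - n%:R * (q1^-1 + q2^-1) * ln 3) ->
  C * (3 `^ q1^-1 * r `^ p1^-1) ^+ n * (3 `^ q2^-1 * r `^ p2^-1) ^+ n <
  ((@beta R n alpha r) `^ t * (N%:R * (r / 2)) ^+ n) `^ t^-1.
Proof.
move=> N0 n0 C0 t0 th0 la r key.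
have r0 : 0 < r by exact: expR_gt0.
have lnr : ln r = - ((1 - th)^-1 * la) by rewrite expRK.
have u1 : 0 < (3 `^ q1^-1 * r `^ p1^-1) ^+ n by rewrite exprn_gt0 // mulr_gt0 ?powR_gt0.
have u2 : 0 < (3 `^ q2^-1 * r `^ p2^-1) ^+ n by rewrite exprn_gt0 // mulr_gt0 ?powR_gt0.
rewrite -ltr_ln ?posrE ?mulr_gt0 ?powR_gt0 //; last first.
  have b0 := @beta_gt0 R n alpha r r0 n0.
  by apply: mulr_gt0; [exact: powR_gt0 | rewrite exprn_gt0 // mulr_gt0 ?ltr0n ?divr_gt0].
rewrite !lnM ?posrE ?mulr_gt0 // !lnU_eq // lnL_eq // lnr.
have := @alg_id n%:R alpha t th la p1^-1 p2^-1 q1^-1 q2^-1 (ln C) (ln 3) (ln (Num.sqrt n%:R))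
   (ln 4) (ln 8) (ln 2).
rewrite pnatr_eq0 -lt0n n0 gt_eqF // => /(_ isT isT th0) ID.
move: key ID; rewrite -/la.
lra.
Qed.
End G.

Theorem theorem3p1 (R : realType) (n : nat) (alpha s t p1 q1 p2 q2 : R) :
  0 < alpha -> alpha < n%:R ->
  0 < t -> t <= s ->
  0 < q1 -> q1 <= p1 ->
  0 < q2 -> q2 <= p2 ->
  s^-1 = p1^-1 + p2^-1 - alpha / n%:R ->
  t / s > Num.max (q1 / p1) (q2 / p2) ->
  ~ (exists C : R, 0 < C /\
       forall f g : n.-tuple R -> R,
         measurable_fun [set: n.-tuple R] f ->
         measurable_fun [set: n.-tuple R] g ->
         (forall x, 0 <= f x) -> (forall x, 0 <= g x) ->
         (morrey_norm p1 q1 (fun x => (f x)%:E) *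
          morrey_norm p2 q2 (fun x => (g x)%:E) < +oo)%E ->
         (morrey_norm s t (B_alpha alpha f g) <=
          C%:E * morrey_norm p1 q1 (fun x => (f x)%:E) *
                 morrey_norm p2 q2 (fun x => (g x)%:E))%E).
Proof.
move=> a0 an t0 ts q10 qp1 q20 qp2 hs hts [C [C0 H]].
have np : (0 : R) < n%:R by apply: lt_trans an.
have n0 : (0 < n)%N by rewrite -(ltr0n R).
have s0 : 0 < s by apply: lt_le_trans ts.
have p10 : 0 < p1 by apply: lt_le_trans qp1.
have p20 : 0 < p2 by apply: lt_le_trans qp2.
set th := Num.max (q1 / p1) (q2 / p2).
have th1 : q1 / p1 <= th by rewrite le_max lexx.
have th2 : q2 / p2 <= th by rewrite le_max lexx orbT.
have th0 : 0 < th by apply: lt_le_trans th1; rewrite divr_gt0.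
have tsle1 : t / s <= 1 by rewrite ler_pdivrMr // mul1r.
have thlt1 : th < 1 by apply: lt_le_trans hts tsle1.
have th0' : 1 - th != 0 by rewrite subr_eq0 eq_sym lt_eqF.
set ga := (1 - th)^-1.
have ga0 : 0 < ga by rewrite invr_gt0 subr_gt0.
have thst : th / t < s^-1.
  by rewrite ltr_pdivrMr // mulrC.
set A := n%:R * ga * ((p1^-1 + p2^-1 - alpha / n%:R) - th / t).
have A0 : 0 < A by rewrite /A -hs !mulr_gt0 // subr_gt0.
set K := (- (n%:R - alpha) * (ln (Num.sqrt n%:R) - ln 4) - n%:R * ln 8 - n%:R * ln 2 / t - ln C
     - n%:R * (q1^-1 + q2^-1) * ln (3 : R)).
set La := (`|K| + 1) / A.
pose N := (Num.trunc (expR La)).+1.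
have N0 : (0 < N)%N by [].
have Np : (0 : R) < N%:R by rewrite ltr0n.
set la := ln (N%:R : R).
have laLa : La < la.
  rewrite /la -[X in X < _]expRK ltr_ln ?posrE ?expR_gt0 //; exact: truncnS_gt.
have la0 : 0 <= la by rewrite /la ln_ge0 // ler1n.
have key : 0 < A * la + K.
  have : A * La < A * la by rewrite ltr_pM2l.
  rewrite /La mulrCA divff ?gt_eqF // mulr1.
  have := ler_norm K; rewrite -normrN => hK.
  have := ler_norm (- K); lra.
pose r := expR (- (ga * la)).
have fin : C * (3 `^ q1^-1 * r `^ p1^-1) ^+ n * (3 `^ q2^-1 * r `^ p2^-1) ^+ n <
  ((@beta R n alpha r) `^ t * (N%:R * (r / 2)) ^+ n) `^ t^-1
  := @final_ineq R n N alpha t C th p1 p2 q1 q2 N0 n0 C0 t0 th0' key.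
have r0 : 0 < r by exact: expR_gt0.
have lnr : ln r = - (ga * la) by rewrite expRK.
have gath : ga * (1 - th) = 1 by rewrite mulVf.
have lnrN : ln (r * N%:R) = th * ln r.
  rewrite lnM ?posrE // lnr -/la.
  have e1 : 1 - ga = - (th * ga) by lra.
  have e2 : (1 - ga) * la = - (th * ga) * la by rewrite e1.
  lra.
have lnr0 : ln r <= 0 by rewrite lnr oppr_le0 mulr_ge0 // ltW.
have rN1 : r * N%:R <= 1.
  have hp : r * N%:R \in Num.pos by rewrite posrE mulr_gt0.
  by rewrite -(lnK hp) expR_le1 lnrN mulr_ge0_le0 // ltW.
have cond1 : ln (r * N%:R) <= p1^-1 / q1^-1 * ln r.
  rewrite lnrN invrK.
  have : (th - q1 / p1) * ln r <= 0 by rewrite mulr_ge0_le0 // subr_ge0.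
  lra.
have cond2 : ln (r * N%:R) <= p2^-1 / q2^-1 * ln r.
  rewrite lnrN invrK.
  have : (th - q2 / p2) * ln r <= 0 by rewrite mulr_ge0_le0 // subr_ge0.
  lra.
have hf1 := @morrey_fE R n N r p1 q1 N0 r0 rN1 q10 qp1 cond1.
have hf2 := @morrey_fE R n N r p2 q2 N0 r0 rN1 q20 qp2 cond2.
have hB := @morrey_B_lower R n N r alpha s t N0 r0 rN1 n0 an t0.
have m1 := @morrey_ge0 R n p1 q1 (fun x => (fE n N r x)%:E).
have m2 := @morrey_ge0 R n p2 q2 (fun x => (fE n N r x)%:E).
have finprod : (morrey_norm p1 q1 (fun x => (fE n N r x)%:E) *
                morrey_norm p2 q2 (fun x => (fE n N r x)%:E) < +oo)%E.
  by apply: le_lt_trans (lee_pmul m1 m2 hf1 hf2) _; rewrite -EFinM ltry.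
have HH := H (fE n N r) (fE n N r) (@fE_meas R n N r) (@fE_meas R n N r)
  (@fE_ge0 R n N r) (@fE_ge0 R n N r) finprod.
have h3 := le_trans hB HH.
have h4 : (C%:E * morrey_norm p1 q1 (fun x => (fE n N r x)%:E) *
                morrey_norm p2 q2 (fun x => (fE n N r x)%:E) <=
   C%:E * ((3 `^ q1^-1 * r `^ p1^-1) ^+ n)%:E * ((3 `^ q2^-1 * r `^ p2^-1) ^+ n)%:E)%E.
  apply: lee_pmul => //; first by rewrite mule_ge0 // lee_fin ltW.
  by apply: lee_pmul => //; rewrite lee_fin ltW.
have := le_trans h3 h4; rewrite -!EFinM lee_fin.
by rewrite leNgt fin.
Qed.
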